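(* Let $\{A_m\}_{m\ge0}$ and $\{B_m\}_{m\ge0}$ be integer-valued random processes with $A_0=B_0$. Suppose there exist $p^A_{ik}\in[0,1]$ such that for all $m\ge0$ and $k,i,i_0,\dots,i_{m-1}\in\mathbb{Z}$ (whenever the conditional probabilities are defined) $$p^A_{ik}=\mathbb{P}(A_{m+1}=k\mid A_{m+1}\ne i,A_m=i)=\mathbb{P}(A_{m+1}=k\mid A_{m+1}\ne i,A_m=i,A_{m-1}=i_{m-1},\dots,A_0=i_0),$$ and similarly for $B_m$ with numbers $p^B_{ik}$, and assume $p^A_{ik}=p^B_{ik}$ for all $i,k\in\mathbb{Z}$. Suppose further that for all $m\ge0$ and $i,i_0,\dots,i_{m-1},j_0,\dots,j_{m-1}\in\mathbb{Z}$ (whenever defined) $$\mathbb{P}(A_{m+1}\ne i\mid A_m=i,A_{m-1}=i_{m-1},\dots,A_0=i_0)\ge \mathbb{P}(B_{m+1}\ne i\mid B_m=i,B_{m-1}=j_{m-1},\dots,B_0=j_0).$$ Then for every $t\in\mathbb{N}$ and $\delta>0$, $$\mathbb{P}\Big(\max_{0\le m\le t}|A_m|\ge\delta\Big)\ge\mathbb{P}\Big(\max_{0\le m\le t}|B_m|\ge\delta\Big).$$ *)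

(* Defs.v *)
From HB Require Import structures.
From mathcomp Require Import all_boot all_order all_algebra.
From mathcomp Require Import all_classical all_reals all_analysis.
Set Implicit Arguments. Unset Strict Implicit. Unset Printing Implicit Defensive.
Import Order.TTheory GRing.Theory Num.Theory.
Local Open Scope classical_set_scope.
Local Open Scope ring_scope.

(* Elementary conditional probability P(E | F) = P(E ∩ F) / P(F),
   used only when P(F) > 0 ("whenever defined"). *)
Definition condprob d (T : measurableType d) (R : realType)
  (P : probability T R) (E F : set T) : R :=
  fine (P (E `&` F)) / fine (P F).

Definition hist d (T : measurableType d) (X : nat -> T -> int)
  (m : nat) (h : nat -> int) : set T :=
  [set w | forall j, (j < m)%N -> X j w = h j].

(* Main.v *)
Require Import Defs.
From HB Require Import structures.
From mathcomp Require Import all_boot all_order all_algebra.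
From mathcomp Require Import all_classical all_reals all_analysis.
From mathcomp Require Import ring lra zify.
Require Import Defs.
Import Order.TTheory GRing.Theory Num.Theory.
Set Implicit Arguments. Unset Strict Implicit. Unset Printing Implicit Defensive.
Local Open Scope classical_set_scope.
Local Open Scope ring_scope.

Section Abs.
Variable (R : realFieldType) (S : seq int).

Fixpoint allp (n : nat) : seq (seq int) :=
  if n is n'.+1 then flatten [seq [seq rcons h k | k <- S] | h <- allp n'] else [:: [::]].

Lemma sum_allpS (F : seq int -> R) n :
  \sum_(h <- allp n.+1) F h = \sum_(h <- allp n) \sum_(k <- S) F (rcons h k).
Proof. by rewrite /= big_flatten big_map; apply: eq_bigr => h _; rewrite big_map. Qed.

Lemma allp_prop n h : h \in allp n -> size h = n /\ all (mem S) h.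
Proof.
elim: n h => [|n IH] h /=; first by rewrite inE => /eqP ->.
move=> /flattenP [s /mapP [h' h'in ->]] /mapP [k kin ->].
have [sz al] := IH _ h'in.
by rewrite size_rcons sz all_rcons al andbT.
Qed.

Lemma allp_in n h : size h = n -> all (mem S) h -> h \in allp n.
Proof.
elim: n h => [|n IH] h; first by case: h.
case/lastP: h => [//|h x]; rewrite size_rcons all_rcons => -[sz] /andP [xS al].
apply/flattenP; exists [seq rcons h k | k <- S]; last by apply/mapP; exists x.
by apply/mapP; exists h => //; apply: IH.
Qed.

Lemma allp_last n h : h \in allp n.+1 -> last 0 h \in S.
Proof.
move=> /allp_prop [sz al]; case/lastP: h sz al => [//|h x] _.
by rewrite all_rcons last_rcons => /andP [].
Qed.

Variable p : int -> int -> R.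
Hypothesis p0 : forall i k, 0 <= p i k.
Definition q i := 1 - \sum_(k <- S | k != i) p i k.
Hypothesis q0 : forall i, 0 <= q i.
Variable th : nat -> int -> R.
Hypothesis th01 : forall m i, 0 <= th m i <= 1.
Variable t : nat.

Definition Dof (f : int -> R) i := \sum_(k <- S | k != i) p i k * f k + q i - f i.

Fixpoint W (n : nat) (i : int) : R :=
  if n is n'.+1 then W n' i + th (t - n)%N i * Dof (W n') i else 0.

Lemma Dof_ge0 n i : 0 <= Dof (W n) i.
Proof.
elim: n i => [|n IH] i.
  by rewrite /Dof /= big1 ?add0r ?subr0 // => k _; rewrite mulr0.
have -> : Dof (W n.+1) i = (1 - th (t - n.+1)%N i) * Dof (W n) i
    + \sum_(k <- S | k != i) p i k * (th (t - n.+1)%N k * Dof (W n) k).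
  rewrite [in LHS]/Dof /=.
  under eq_bigr do rewrite mulrDr.
  rewrite big_split /= [Dof (W n) i]/Dof. ring.
have /andP [h0 h1] := th01 (t - n.+1) i.
apply: addr_ge0; first by apply: mulr_ge0 => //; rewrite subr_ge0.
apply: sumr_ge0 => k _; apply: mulr_ge0 => //; apply: mulr_ge0 => //.
by have /andP [] := th01 (t - n.+1) k.
Qed.

Hypothesis uS : uniq S.

Definition Phi (a : seq int -> R) m :=
  \sum_(h <- allp m.+1) (a h * W (t - m)%N (last 0 h) - a h).

Lemma Phi_step (a J : seq int -> R) m :
  (m < t)%N ->
  (forall h, h \in allp m.+1 -> a (rcons h (last 0 h)) = a h - J h) ->
  (forall h k, h \in allp m.+1 -> k != last 0 h ->
      a (rcons h k) = J h * p (last 0 h) k) ->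
  Phi a m.+1 - Phi a m = \sum_(h <- allp m.+1)
      (J h - th m (last 0 h) * a h) * Dof (W (t - m.+1)%N) (last 0 h).
Proof.
move=> mt H1 H2.
rewrite /Phi sum_allpS -sumrB; apply: eq_big_seq => h hin.
have iS : last 0 h \in S by apply: allp_last hin.
have e1 : (t - m = (t - m.+1).+1)%N by rewrite subnSK.
rewrite e1.
set n := (t - m.+1)%N.
have e2 : (t - n.+1 = m)%N by rewrite -e1 subKn // ltnW.
rewrite [W n.+1 _]/= e2.
rewrite (bigD1_seq (last 0 h)) //= last_rcons H1 //.
rewrite (eq_bigr (fun k => J h * (p (last 0 h) k * W n k) - J h * p (last 0 h) k)); last first.
  by move=> k kni; rewrite last_rcons H2 // mulrA.
rewrite sumrB -!big_distrr /=.
rewrite /Dof /q. ring.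
Qed.
Lemma Phi_mono (a J : seq int -> R) (sg : bool) :
  (forall m h, (m < t)%N -> h \in allp m.+1 -> a (rcons h (last 0 h)) = a h - J h) ->
  (forall m h k, (m < t)%N -> h \in allp m.+1 -> k != last 0 h ->
      a (rcons h k) = J h * p (last 0 h) k) ->
  (forall m h, (m < t)%N -> h \in allp m.+1 ->
     if sg then th m (last 0 h) * a h <= J h else J h <= th m (last 0 h) * a h) ->
  forall m, (m <= t)%N -> if sg then Phi a 0 <= Phi a m else Phi a m <= Phi a 0.
Proof.
move=> H1 H2 H3; elim=> [|m IH] mt; first by case: sg H3 => _.
have mt' : (m < t)%N by [].
have := @Phi_step a J m mt' (fun h => H1 m h mt') (fun h k => H2 m h k mt').
move: (IH (ltnW mt')) => {}IH.
have hs : if sg then 0 <= \sum_(h <- allp m.+1)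
      (J h - th m (last 0 h) * a h) * Dof (W (t - m.+1)%N) (last 0 h)
    else \sum_(h <- allp m.+1)
      (J h - th m (last 0 h) * a h) * Dof (W (t - m.+1)%N) (last 0 h) <= 0.
  case: sg H3 IH => H3 IH.
    rewrite big_seq; apply: sumr_ge0 => h hin.
    by apply: mulr_ge0; [rewrite subr_ge0; exact: H3 | exact: Dof_ge0].
  rewrite big_seq -oppr_ge0 -sumrN; apply: sumr_ge0 => h hin; rewrite oppr_ge0.
  by apply: mulr_le0_ge0; [rewrite subr_le0; exact: H3 | exact: Dof_ge0].
case: sg H3 IH hs => H3 IH hs e; rewrite -e in hs.
  by apply: (le_trans IH); rewrite -subr_ge0.
by apply: le_trans IH; rewrite -subr_le0.
Qed.

Lemma Phi_t (a : seq int -> R) : Phi a t = - \sum_(h <- allp t.+1) a h.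
Proof.
rewrite /Phi subnn /= -sumrN; apply: eq_bigr => h _; ring.
Qed.

Lemma compare (a b Ja Jb : seq int -> R) :
  (forall h, h \in allp 1 -> a h = b h) ->
  (forall m h, (m < t)%N -> h \in allp m.+1 -> a (rcons h (last 0 h)) = a h - Ja h) ->
  (forall m h k, (m < t)%N -> h \in allp m.+1 -> k != last 0 h ->
      a (rcons h k) = Ja h * p (last 0 h) k) ->
  (forall m h, (m < t)%N -> h \in allp m.+1 -> b (rcons h (last 0 h)) = b h - Jb h) ->
  (forall m h k, (m < t)%N -> h \in allp m.+1 -> k != last 0 h ->
      b (rcons h k) = Jb h * p (last 0 h) k) ->
  (forall m h, (m < t)%N -> h \in allp m.+1 -> th m (last 0 h) * a h <= Ja h) ->
  (forall m h, (m < t)%N -> h \in allp m.+1 -> Jb h <= th m (last 0 h) * b h) ->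
  \sum_(h <- allp t.+1) a h <= \sum_(h <- allp t.+1) b h.
Proof.
move=> ab HA1 HA2 HB1 HB2 HA HB.
have PA := @Phi_mono a Ja true HA1 HA2 HA t (leqnn t).
have PB := @Phi_mono b Jb false HB1 HB2 HB t (leqnn t).
rewrite /= !Phi_t in PA PB.
have e0 : Phi a 0 = Phi b 0 by rewrite /Phi; apply: eq_big_seq => h hin; rewrite ab.
rewrite -lerN2; apply: (le_trans PB); rewrite -e0; exact: PA.
Qed.

End Abs.

Section Meas.
Variables (R : realType) (d : measure_display) (T : measurableType d)
  (P : probability T R).

Definition Pr (E : set T) : R := fine (P E).

Lemma PE E : measurable E -> P E = (Pr E)%:E.
Proof. by move=> mE; rewrite /Pr fineK // fin_num_measure. Qed.

Lemma Pr_ge0 E : 0 <= Pr E.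
Proof. exact/fine_ge0/measure_ge0. Qed.

Lemma Pr_gt0 E : measurable E -> (0 < P E)%E = (0 < Pr E).
Proof. by move=> mE; rewrite PE // lte_fin. Qed.

Lemma PrU A B : measurable A -> measurable B -> A `&` B = set0 ->
  Pr (A `|` B) = Pr A + Pr B.
Proof.
move=> mA mB AB.
have mU : measurable (A `|` B) by exact: measurableU.
have : (Pr (A `|` B))%:E = (Pr A + Pr B)%:E.
  by rewrite EFinD -!PE //; exact: (@measureU _ _ _ P A B mA mB AB).
by move=> [].
Qed.

Lemma Pr_le A B : measurable A -> measurable B -> A `<=` B -> Pr A <= Pr B.
Proof.
move=> mA mB AB; rewrite -lee_fin -!PE //.
by apply: (@le_measure _ _ _ P A B); rewrite ?inE.
Qed.

Lemma inbigU (I : eqType) (s : seq I) (F : I -> set T) w :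
  (\big[setU/set0]_(x <- s) F x) w <-> exists2 x, x \in s & F x w.
Proof.
elim: s => [|x s IH]; rewrite ?big_nil ?big_cons.
  by split => // [[]].
split.
  move=> [Fx|/IH [y ys Fy]]; first by exists x; rewrite ?inE ?eqxx.
  by exists y; rewrite // inE ys orbT.
move=> [y]; rewrite inE => /orP [/eqP ->|ys] Fy; first by left.
by right; apply/IH; exists y.
Qed.

Lemma Pr_add (I : eqType) (s : seq I) (F : I -> set T) : uniq s ->
  (forall x, x \in s -> measurable (F x)) ->
  (forall x y, x \in s -> y \in s -> x != y -> F x `&` F y = set0) ->
  measurable (\big[setU/set0]_(x <- s) F x) /\
  Pr (\big[setU/set0]_(x <- s) F x) = \sum_(x <- s) Pr (F x).
Proof.
elim: s => [|x s IH] /=; first by rewrite !big_nil /Pr measure0.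
move=> /andP [xs us] mF dF.
have sub : forall y, y \in s -> y \in x :: s by move=> y ys; rewrite inE ys orbT.
have [m1 e1] := IH us (fun y ys => mF y (sub y ys))
  (fun y z ys zs => dF y z (sub y ys) (sub z zs)).
have mx : measurable (F x) by apply: mF; rewrite inE eqxx.
rewrite !big_cons; split; first exact: measurableU.
rewrite PrU // ?e1 //.
apply/seteqP; split => // w [Fx /inbigU [y ys Fy]].
have yin := ys.
have : F x `&` F y = set0.
  apply: dF; rewrite ?inE ?eqxx ?yin ?orbT //.
  by apply/negP => /eqP xy; rewrite xy yin in xs.
by move=> e; have : (F x `&` F y) w by []; rewrite e.
Qed.

End Meas.

Section Proc.
Variables (R : realType) (d : measure_display) (T : measurableType d)
  (P : probability T R).
Variable (X : nat -> T -> int).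
Hypothesis mX : forall m k, measurable [set w | X m w = k].

Definition cyl (h : seq int) : set T :=
  [set w | forall j, (j < size h)%N -> X j w = nth 0 h j].

Lemma cyl_rcons h k : cyl (rcons h k) = cyl h `&` [set w | X (size h) w = k].
Proof.
apply/seteqP; split => w /=.
  move=> H; split.
    move=> j jh; have := H j; rewrite size_rcons nth_rcons jh; apply.
    exact: leqW.
  by have := H (size h); rewrite nth_rcons ltnn eqxx size_rcons ltnSn; apply.
move=> [H1 H2] j; rewrite size_rcons ltnS leq_eqVlt nth_rcons.
by move=> /orP [/eqP->|jh]; [rewrite ltnn eqxx | rewrite jh; apply: H1].
Qed.

Lemma m_cyl h : measurable (cyl h).
Proof.
elim/last_ind: h => [|h k IH].
  by rewrite (_ : cyl [::] = setT); [exact: measurableT | apply/seteqP; split].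
by rewrite cyl_rcons; apply: measurableI.
Qed.

Lemma neq_setC m i : [set w | X m w != i] = ~` [set w | X m w = i].
Proof. by apply/seteqP; split => w /=; move/eqP. Qed.

Lemma m_neq m i : measurable [set w | X m w != i].
Proof. by rewrite neq_setC; apply: measurableC. Qed.

Definition av h := Pr P (cyl h).
Definition Jv h := Pr P (cyl h `&` [set w | X (size h) w != last 0 h]).

Lemma Pr_split h n i : Pr P (cyl h) =
  Pr P (cyl h `&` [set w | X n w = i]) + Pr P (cyl h `&` [set w | X n w != i]).
Proof.
rewrite -PrU; last 3 first.
- exact: measurableI (m_cyl h) (mX n i).
- exact: measurableI (m_cyl h) (m_neq n i).
- by apply/seteqP; split => // w [[_ /= ->]] [_ /=]; rewrite eqxx.
congr (Pr P _); apply/seteqP; split => w.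
  by move=> cw /=; case: (eqVneq (X n w) i) => ?; [left|right].
by case=> [] [].
Qed.

Lemma av_rcons_last h : av (rcons h (last 0 h)) = av h - Jv h.
Proof. by rewrite /av /Jv cyl_rcons (Pr_split h (size h) (last 0 h)) addrK. Qed.

Lemma cyl_hist h m : size h = m.+1 ->
  [set w | X m w = last 0 h] `&` hist X m (fun j => nth 0 h j) = cyl h.
Proof.
move=> sh; rewrite -nth_last sh /=.
apply/seteqP; split => w /=.
  move=> [Xm H] j; rewrite sh ltnS leq_eqVlt => /orP [/eqP ->|jm] //.
  exact: H.
by move=> H; split => [|j jm]; apply: H; rewrite sh // ltnW.
Qed.

Variable p : int -> int -> R.
Hypothesis Hp : forall m i k (h : nat -> int),
  (0 < P ([set w | X m.+1 w != i] `&` [set w | X m w = i] `&` hist X m h))%E ->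
  p i k = condprob P [set w | X m.+1 w = k]
            ([set w | X m.+1 w != i] `&` [set w | X m w = i] `&` hist X m h).

Lemma av_rcons_neq h m k : size h = m.+1 -> k != last 0 h ->
  av (rcons h k) = Jv h * p (last 0 h) k.
Proof.
move=> sh ki.
have eE : [set w | X m.+1 w != last 0 h] `&` [set w | X m w = last 0 h] `&`
    hist X m (fun j => nth 0 h j) = cyl h `&` [set w | X (size h) w != last 0 h].
  by rewrite -setIA cyl_hist // setIC sh.
have eK : [set w | X m.+1 w = k] `&` (cyl h `&` [set w | X (size h) w != last 0 h])
    = cyl (rcons h k).
  rewrite cyl_rcons sh; apply/seteqP; split => w /=.
    by move=> [Xk [ch _]].
  by move=> [ch Xk]; rewrite Xk.
have mE := measurableI _ _ (m_cyl h) (m_neq (size h) (last 0 h)).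
case: (ltrP 0 (Jv h)) => [Jpos|Jle].
  have := @Hp m (last 0 h) k (fun j => nth 0 h j); rewrite eE Pr_gt0 // => /(_ Jpos) ->.
  rewrite /condprob eK.
  have -> : fine (P (cyl (rcons h k))) = av (rcons h k) by [].
  have -> : fine (P (cyl h `&` [set w | X (size h) w != last 0 h])) = Jv h by [].
  by rewrite mulrC divfK // lt0r_neq0.
have J0 : Jv h = 0 by apply/eqP; rewrite eq_le Jle Pr_ge0.
rewrite J0 mul0r; apply/eqP; rewrite eq_le Pr_ge0 andbT -J0.
apply: Pr_le; [exact: m_cyl | exact: mE |].
by rewrite -eK; apply: subIsetr.
Qed.

Lemma sum_neq_le h (s : seq int) i : uniq s ->
  \sum_(k <- s | k != i) av (rcons h k) <= Pr P (cyl h `&` [set w | X (size h) w != i]).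
Proof.
move=> us; rewrite -big_filter.
have dj : forall k k', k \in [seq k <- s | k != i] -> k' \in [seq k <- s | k != i] ->
    k != k' -> cyl (rcons h k) `&` cyl (rcons h k') = set0.
  move=> k k' _ _ kk'; apply/seteqP; split => // w; rewrite !cyl_rcons.
  by move=> [[_ /= ->]] [_ /= /eqP]; rewrite (negbTE kk').
have [mU eU] := @Pr_add _ _ _ P _ [seq k <- s | k != i] (fun k => cyl (rcons h k))
  (filter_uniq _ us) (fun k _ => m_cyl _) dj.
rewrite /av -eU; apply: Pr_le => //.
  exact: measurableI _ _ (m_cyl h) (m_neq (size h) i).
move=> w /inbigU [k]; rewrite mem_filter => /andP [ki _].
by rewrite cyl_rcons => -[ch /= ->].
Qed.

Lemma cyl_disj h h' : size h = size h' -> h != h' -> cyl h `&` cyl h' = set0.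
Proof.
move=> sz hh'; apply/seteqP; split => // w [c1 c2].
move: hh'; rewrite (_ : h = h') ?eqxx //.
apply: (eq_from_nth (x0:=0)) => // j jlt.
by rewrite -c1 // c2 // -sz.
Qed.

Lemma union_allp (S : seq int) n w :
  (\big[setU/set0]_(h <- allp S n) cyl h) w <-> forall j, (j < n)%N -> X j w \in S.
Proof.
split.
  move=> /inbigU [h /allp_prop [sz al] ch] j jn.
  rewrite ch ?sz //; apply: (allP al); apply: mem_nth; rewrite sz //.
move=> H; apply/inbigU; exists [seq X j w | j <- iota 0 n].
  apply: allp_in; first by rewrite size_map size_iota.
  by apply/allP => x /mapP [j]; rewrite mem_iota add0n => /andP [_ jn] ->; apply: H.
move=> j; rewrite size_map size_iota => jn.
by rewrite (nth_map 0%N) ?size_iota // nth_iota.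
Qed.

End Proc.

Lemma uniq_allp (S : seq int) n : uniq S -> uniq (allp S n).
Proof.
move=> uS; elim: n => [//|n IH] /=.
apply: (@allpairs_uniq _ _ _ (fun h k => rcons h k)) => //.
by move=> [h k] [h' k'] _ _ /= /rcons_inj.
Qed.

Lemma maxE (R : realType) (delta : R) n (f : nat -> int) : 0 < delta ->
  (delta <= (\big[Num.max/0]_(m < n) `|f m|)%:~R) <->
  exists2 m, (m < n)%N & delta <= (`|f m|)%:~R.
Proof.
move=> dp; split.
  pose Q := fun x : int => delta <= x%:~R -> exists2 m, (m < n)%N & delta <= (`|f m|)%:~R.
  apply: (@big_ind int Q) => [h|x y Qx Qy|i _ h].
  - by have := lt_le_trans dp h; rewrite ltxx.
  - by rewrite /Q /Order.max; case: ifP.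
  - by exists i.
move=> [m mn h]; apply: (le_trans h); rewrite ler_int.
have := @le_bigmax_seq _ _ _ (index_enum 'I_n) (0:int) (Ordinal mn) predT
  (fun i : 'I_n => `|f i|) (mem_index_enum _) isT.
by [].
Qed.

Lemma av_pn (R : realType) (d : measure_display) (T : measurableType d)
  (P : probability T R) (X : nat -> T -> int)
  (mX : forall m k, measurable [set w | X m w = k]) (p : int -> int -> R)
  (Hp : forall m i k (h : nat -> int),
  (0 < P ([set w | X m.+1 w != i] `&` [set w | X m w = i] `&` hist X m h))%E ->
  p i k = condprob P [set w | X m.+1 w = k]
            ([set w | X m.+1 w != i] `&` [set w | X m w = i] `&` hist X m h))
  (S : seq int) (uS : uniq S) h m k :
  size h = m.+1 -> k != last 0 h ->
  av P X (rcons h k) = Jv P X h *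
    (if \sum_(k' <- S | k' != last 0 h) p (last 0 h) k' <= 1 then p (last 0 h) k else 0).
Proof.
move=> sh kl; rewrite (av_rcons_neq mX Hp sh kl); case: ifP => // hs.
have J0 : Jv P X h = 0.
  apply/eqP; rewrite eq_le Pr_ge0 andbT; rewrite leNgt; apply/negP => Jp.
  have := sum_neq_le P mX h (last 0 h) uS.
  rewrite (eq_bigr (fun k' => Jv P X h * p (last 0 h) k')); last first.
    by move=> k' k'l; rewrite (av_rcons_neq mX Hp sh k'l).
  rewrite -big_distrr /= -/(Jv P X h) -{2}[Jv P X h]mulr1 ler_pM2l //.
  by rewrite hs.
by rewrite J0 !mul0r.
Qed.

Theorem proposition1 (R : realType) (d : measure_display)
  (T : measurableType d) (P : probability T R)
  (A B : nat -> T -> int)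
  (mA : forall m k, measurable [set w | A m w = k])
  (mB : forall m k, measurable [set w | B m w = k])
  (A0B0 : forall w, A 0%N w = B 0%N w)
  (pA pB : int -> int -> R)
  (pA01 : forall i k, 0 <= pA i k <= 1)
  (pB01 : forall i k, 0 <= pB i k <= 1)
  (HpA : forall (m : nat) (i k : int) (h : nat -> int),
     ((0 < P ([set w | A m.+1 w != i] `&` [set w | A m w = i]))%E ->
       pA i k = condprob P [set w | A m.+1 w = k]
                  ([set w | A m.+1 w != i] `&` [set w | A m w = i])) /\
     ((0 < P ([set w | A m.+1 w != i] `&` [set w | A m w = i] `&` hist A m h))%E ->
       pA i k = condprob P [set w | A m.+1 w = k]
                  ([set w | A m.+1 w != i] `&` [set w | A m w = i] `&` hist A m h)))
  (HpB : forall (m : nat) (i k : int) (h : nat -> int),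
     ((0 < P ([set w | B m.+1 w != i] `&` [set w | B m w = i]))%E ->
       pB i k = condprob P [set w | B m.+1 w = k]
                  ([set w | B m.+1 w != i] `&` [set w | B m w = i])) /\
     ((0 < P ([set w | B m.+1 w != i] `&` [set w | B m w = i] `&` hist B m h))%E ->
       pB i k = condprob P [set w | B m.+1 w = k]
                  ([set w | B m.+1 w != i] `&` [set w | B m w = i] `&` hist B m h)))
  (HpAB : forall i k, pA i k = pB i k)
  (Hjump : forall (m : nat) (i : int) (hA hB : nat -> int),
     (0 < P ([set w | A m w = i] `&` hist A m hA))%E ->
     (0 < P ([set w | B m w = i] `&` hist B m hB))%E ->
     condprob P [set w | B m.+1 w != i] ([set w | B m w = i] `&` hist B m hB)
       <= condprob P [set w | A m.+1 w != i] ([set w | A m w = i] `&` hist A m hA))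
  (t : nat) (delta : R) (Hdelta : 0 < delta) :
  (P [set w | (delta <= (\big[Num.max/0]_(m < t.+1) `|B m w|)%:~R)%R]
     <= P [set w | (delta <= (\big[Num.max/0]_(m < t.+1) `|A m w|)%:~R)%R])%E.
Proof.
pose N := Num.Def.archi_bound delta.
have HN : delta < N%:R := archi_boundP (ltW Hdelta).
pose S := [seq k <- [seq (i%:Z - N%:Z) | i <- iota 0 (2 * N).+1] | `|k|%:~R < delta].
have memS : forall k : int, (k \in S) = (`|k|%:~R < delta).
  move=> k; rewrite mem_filter; case: (boolP (`|k|%:~R < delta)) => kd; rewrite ?andTb ?andFb //.
  have kN : `|k| < N%:Z.
    rewrite -(ltr_int R); apply: (lt_trans kd).
    by rewrite (_ : (N%:Z)%:~R = N%:R :> R).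
  apply/mapP; exists (absz (k + N%:Z)); last by lia.
  by rewrite mem_iota; apply/andP; split; [|lia].
have uS : uniq S.
  apply: filter_uniq; rewrite map_inj_uniq ?iota_uniq //.
  by move=> x y e; lia.
pose pn := fun i k => if \sum_(k' <- S | k' != i) pA i k' <= 1 then pA i k else 0.
have pn0 : forall i k, 0 <= pn i k.
  by move=> i k; rewrite /pn; case: ifP => // _; case/andP: (pA01 i k).
have qn0 : forall i, 0 <= q S pn i.
  move=> i; rewrite /q /pn.
  case h: (\sum_(k' <- S | k' != i) pA i k' <= 1).
    by rewrite subr_ge0; exact: h.
  by rewrite big1 // subr0.
have HpA' : forall m i k (h : nat -> int),
  (0 < P ([set w | A m.+1 w != i] `&` [set w | A m w = i] `&` hist A m h))%E ->
  pA i k = condprob P [set w | A m.+1 w = k]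
            ([set w | A m.+1 w != i] `&` [set w | A m w = i] `&` hist A m h).
  by move=> m i k h; case: (HpA m i k h).
have HpB' : forall m i k (h : nat -> int),
  (0 < P ([set w | B m.+1 w != i] `&` [set w | B m w = i] `&` hist B m h))%E ->
  pA i k = condprob P [set w | B m.+1 w = k]
            ([set w | B m.+1 w != i] `&` [set w | B m w = i] `&` hist B m h).
  by move=> m i k h; rewrite HpAB; case: (HpB m i k h).
have Jle : forall X, (forall m k, measurable [set w | X m w = k]) ->
    forall h, Jv P X h <= av P X h.
  by move=> X mX h; rewrite -subr_ge0 -(av_rcons_last P mX h); apply: Pr_ge0.
pose rat := fun h => if 0 < av P B h then Jv P B h / av P B h else 0.
pose th := fun m i => \big[Num.max/0]_(h <- allp S m.+1 | last 0 h == i) rat h.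
have rat01 : forall h, 0 <= rat h <= 1.
  move=> h; rewrite /rat; case: ifP => hp; last by rewrite lexx ler01.
  apply/andP; split; first by apply: divr_ge0; [apply: Pr_ge0 | apply: ltW].
  by rewrite ler_pdivrMr // mul1r; apply: Jle.
have th01 : forall m i, 0 <= th m i <= 1.
  move=> m i; rewrite /th; apply: (@big_ind _ (fun x => 0 <= x <= 1)) => //.
  - by rewrite lexx ler01.
  - by move=> x y hx hy; rewrite /Order.max; case: ifP.
have thB : forall m h, (m < t)%N -> h \in allp S m.+1 ->
    Jv P B h <= th m (last 0 h) * av P B h.
  move=> m h _ hin; case: (ltrP 0 (av P B h)) => hp.
    rewrite -ler_pdivrMr //.
    have : rat h <= th m (last 0 h).
      exact: (@le_bigmax_seq _ _ _ (allp S m.+1) 0 h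
        (fun h' => last 0 h' == last 0 h) rat hin (eqxx _)).
    by rewrite /rat hp.
  have a0 : av P B h = 0 by apply/eqP; rewrite eq_le hp Pr_ge0.
  by rewrite a0 mulr0 -a0 Jle.
have thA : forall m h, (m < t)%N -> h \in allp S m.+1 ->
    th m (last 0 h) * av P A h <= Jv P A h.
  move=> m h _ hin; have [sz _] := allp_prop hin.
  case: (ltrP 0 (av P A h)) => hp; last first.
    have a0 : av P A h = 0 by apply/eqP; rewrite eq_le hp Pr_ge0.
    by rewrite a0 mulr0 Pr_ge0.
  rewrite -ler_pdivlMr //.
  have rA0 : 0 <= Jv P A h / av P A h by apply: divr_ge0; [apply: Pr_ge0|apply: ltW].
  rewrite /th big_seq_cond.
  apply: (@big_ind _ (fun x => x <= Jv P A h / av P A h)) => //.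
    by move=> x y hx hy; rewrite /Order.max; case: ifP.
  move=> h' /andP [h'in /eqP lh']; rewrite /rat; case: ifP => bp //.
  have [sz' _] := allp_prop h'in.
  have eA : condprob P [set w | A m.+1 w != last 0 h]
      ([set w | A m w = last 0 h] `&` hist A m (fun j => nth 0 h j))
      = Jv P A h / av P A h.
    by rewrite (cyl_hist A sz) /condprob setIC /Jv /av /Pr sz.
  have eB : condprob P [set w | B m.+1 w != last 0 h]
      ([set w | B m w = last 0 h] `&` hist B m (fun j => nth 0 h' j))
      = Jv P B h' / av P B h'.
    by rewrite -lh' (cyl_hist B sz') /condprob setIC /Jv /av /Pr sz'.
  rewrite -eA -eB; apply: Hjump.
    by rewrite (cyl_hist A sz) Pr_gt0 //; apply: m_cyl.
  by rewrite -lh' (cyl_hist B sz') Pr_gt0 //; apply: m_cyl.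
have hab : forall h, h \in allp S 1 -> av P A h = av P B h.
  move=> h hin; have [sz _] := allp_prop hin.
  rewrite /av; congr (Pr P _); apply/seteqP; split => w H j; rewrite sz => jl;
    have j0 : j = 0%N by case: j jl.
    by subst j; rewrite -A0B0; apply: H; rewrite sz.
  by subst j; rewrite A0B0; apply: H; rewrite sz.
have key := @compare R S pn pn0 qn0 th th01 t uS (av P A) (av P B) (Jv P A) (Jv P B) hab
  (fun m h _ _ => av_rcons_last P mA h)
  (fun m h k _ hin kl => @av_pn R d T P A mA pA HpA' S uS h m k (proj1 (allp_prop hin)) kl)
  (fun m h _ _ => av_rcons_last P mB h)
  (fun m h k _ hin kl => @av_pn R d T P B mB pA HpB' S uS h m k (proj1 (allp_prop hin)) kl)
  thA thB.
have Ev : forall X : nat -> T -> int,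
   [set w | (delta <= (\big[Num.max/0]_(m < t.+1) `|X m w|)%:~R)%R] =
   ~` (\big[setU/set0]_(h <- allp S t.+1) cyl X h).
  move=> X; apply/seteqP; split => w /=.
    move=> /(maxE t.+1 (fun m => X m w) Hdelta) [m mt dm] U; have H := (union_allp X S t.+1 w).1 U.
    by have := H m mt; rewrite memS ltNge dm.
  move=> nU; case: (boolP [exists m : 'I_t.+1, delta <= (`|X m w|)%:~R]).
    by move=> /existsP [m dm]; apply/(maxE t.+1 (fun m => X m w) Hdelta); exists m.
  move=> /existsPn H; exfalso; apply: nU; apply: (union_allp X S t.+1 w).2 => j jt.
  by rewrite memS ltNge; apply: (H (Ordinal jt)).
have PU : forall X : nat -> T -> int, (forall m k, measurable [set w | X m w = k]) ->
   P [set w | (delta <= (\big[Num.max/0]_(m < t.+1) `|X m w|)%:~R)%R] =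
   (1 - \sum_(h <- allp S t.+1) av P X h)%:E.
  move=> X mX; rewrite Ev.
  have [mU eU] := @Pr_add R d T P _ (allp S t.+1) (cyl X) (uniq_allp t.+1 uS)
    (fun h _ => m_cyl mX h)
    (fun h h' hin h'in hh' => cyl_disj X
        (etrans (proj1 (allp_prop hin)) (esym (proj1 (allp_prop h'in)))) hh').
  by rewrite probability_setC // PE // eU EFinB.
rewrite !PU // lee_fin lerD2l lerN2; exact: key.
Qed.
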